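(* Let $(Z_n)_{n\ge0}$ be a linear fractional Galton–Watson process in i.i.d. random environment (as in the context) which is supercritical, i.e. $R_\infty<\infty=R^{(-1)}_\infty$ a.s. Then $$\frac{1}{1-q(\mathbf{e})}=R_\infty\in[1,\infty)\quad\text{a.s.},$$ in particular $q(\mathbf{e})<1$ a.s. Furthermore, $$\lim_{n\to\infty}\frac{1}{\Pi_n}\Big(\frac{1}{R_n}-\mathbf{P}(Z_n>0)\Big)=\frac{1}{R_\infty^2}\quad\text{a.s.}$$
   Context: Let $(A_n,B_n)_{n\ge1}$ be i.i.d. copies of $(A,B)$ with $\mathbb{P}(A>0,B>0,A+B\ge1)=1$; $\mathbf{e}=(A_n,B_n)_{n\ge1}$. For $a,b>0$, $a+b\ge1$, $LF(a,b)$ is the distribution on $\mathbb{N}_0$ whose generating function $f$ satisfies $1/(1-f(s))=a/(1-s)+b$, $s\in[0,1)$. $(Z_n)$, $Z_0=1$: given $\mathbf{e}$, each individual of generation $k-1$ independently has offspring law $LF(A_k,B_k)$. $\mathbf{P}=\mathbb{P}(\cdot\mid\mathbf{e})$, and $q(\mathbf{e})=\lim_{n\to\infty}\mathbb{P}(Z_n=0\mid A_1,B_1,\dots,A_n,B_n)$ is the quenched extinction probability. $\Pi_0=1$, $\Pi_n=\prod_{k=1}^nA_k$, $R_n=\sum_{k=1}^n\Pi_{k-1}B_k$, $R_\infty=\lim R_n$, $R^{(-1)}_\infty=\sum_{k\ge1}\Pi_k^{-1}B_k$. *)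

(* Defs.v *)
From HB Require Import structures.
From mathcomp Require Import all_boot all_order all_algebra.
From mathcomp Require Import all_classical all_reals all_analysis.
Set Implicit Arguments. Unset Strict Implicit. Unset Printing Implicit Defensive.
Import Order.TTheory GRing.Theory Num.Theory.
Import numFieldNormedType.Exports.
Local Open Scope classical_set_scope.
Local Open Scope ring_scope.

Section LFGW.
Context {R : realType}.

Definition rseries (m : nat) (u : nat -> R) : R :=
  limn (fun n => \sum_(m <= k < n) u k).

Definition is_pmf (p : nat -> R) : Prop :=
  (forall k, 0 <= p k) /\ ((fun n : nat => \sum_(0 <= k < n) p k) @ \oo --> (1 : R)).

Definition genfun (p : nat -> R) (s : R) : R := rseries 0 (fun k => p k * s ^+ k).

Definition is_LF (a b : R) (p : nat -> R) : Prop :=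
  is_pmf p /\ forall s : R, 0 <= s < 1 -> 1 / (1 - genfun p s) = a / (1 - s) + b.

Definition conv (p q : nat -> R) (k : nat) : R :=
  \sum_(i < k.+1) p i * q (k - i)%N.
Fixpoint convpow (p : nat -> R) (j : nat) : nat -> R :=
  match j with
  | 0 => fun k => (k == 0%N)%:R
  | j'.+1 => conv p (convpow p j')
  end.

(* Quenched law of Z_n in the (fixed) environment whose generation-k
   offspring law is off k (k >= 1): Z_0 = 1 and, given Z_{n} = j, Z_{n+1} is
   a sum of j independent variables with law off (n+1). *)
Fixpoint gw_law (off : nat -> nat -> R) (n : nat) : nat -> R :=
  match n with
  | 0 => fun k => (k == 1%N)%:R
  | n'.+1 => fun k => rseries 0 (fun j => gw_law off n' j * convpow (off n) j k)
  end.

Definition surv_prob (off : nat -> nat -> R) (n : nat) : R :=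
  rseries 1 (gw_law off n).
Definition ext_prob (off : nat -> nat -> R) : R :=
  limn (fun n => gw_law off n 0%N).

(* Environment functionals; A k, B k are meaningful for k >= 1. *)
Definition Pi (A : nat -> R) (n : nat) : R := \prod_(1 <= k < n.+1) A k.
Definition Rn (A B : nat -> R) (n : nat) : R :=
  \sum_(1 <= k < n.+1) Pi A k.-1 * B k.
Definition Rinf (A B : nat -> R) : \bar R :=
  (\sum_(1 <= k <oo) (Pi A k.-1 * B k)%:E)%E.
Definition Rinf_inv (A B : nat -> R) : \bar R :=
  (\sum_(1 <= k <oo) ((Pi A k)^-1 * B k)%:E)%E.

End LFGW.


(* (A_k, B_k)_{k >= 1} are i.i.d. random pairs on the probability space P:
   each A_k, B_k is measurable, and for every finite set s of indices >= 1
   and Borel sets U_k, V_k,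
   P(forall k in s, A_k in U_k and B_k in V_k)
     = prod_{k in s} P(A_1 in U_k and B_1 in V_k).
   (independence of the pairs + each pair distributed as (A_1,B_1);
    rectangles form a pi-system generating the Borel sets of R^2.) *)
Definition iid_pairs {R : realType} {d : measure_display} {T : measurableType d}
  (P : probability T R) (A B : nat -> T -> R) : Prop :=
  (forall k, (1 <= k)%N ->
     measurable_fun setT (A k) /\ measurable_fun setT (B k)) /\
  forall (s : seq nat) (U V : nat -> set R),
    uniq s -> all (fun k => 1 <= k)%N s ->
    (forall k, measurable (U k)) -> (forall k, measurable (V k)) ->
    P [set w | forall k, k \in s -> U k (A k w) /\ V k (B k w)] =
    (\prod_(k <- s) P [set w | U k (A 1%N w) /\ V k (B 1%N w)])%E.

(* Main.v *)
Require Import Defs.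
From HB Require Import structures.
From mathcomp Require Import all_boot all_order all_algebra.
From mathcomp Require Import all_classical all_reals all_analysis.
From mathcomp Require Import ring lra measurable_realfun.
Import Order.TTheory GRing.Theory Num.Theory.
Import numFieldNormedType.Exports.
Local Open Scope classical_set_scope.
Local Open Scope ring_scope.

Section P1.
Context {R : realType}.
Local Open Scope ereal_scope.
Lemma ser_cvg (u : nat -> R) m l : (forall k, (m <= k)%N -> (0 <= u k)%R) ->
  \sum_(m <= k <oo) (u k)%:E = l%:E ->
  (fun n => (\sum_(m <= k < n) u k)%R) @ \oo --> l.
Proof.
move=> u0 H.
have C := @is_cvg_nneseries R (fun k => (u k)%:E) xpredT m (fun k mk _ => u0 k mk).
rewrite H in C.
have E : (fun n => (\sum_(m <= k < n) u k)%R) =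
   fine \o (fun n => \sum_(m <= k < n) (u k)%:E).
  by apply/funext => n /=; rewrite sumEFin.
by rewrite E; exact: fine_cvg.
Qed.

Lemma rseries_eq (u : nat -> R) m l : (forall k, (m <= k)%N -> (0 <= u k)%R) ->
  \sum_(m <= k <oo) (u k)%:E = l%:E -> rseries m u = l.
Proof. by move=> u0 H; rewrite /rseries; apply: cvg_lim => //; exact: ser_cvg. Qed.

Lemma real_eser (u : nat -> R) m l :
  (fun n => (\sum_(m <= k < n) u k)%R) @ \oo --> l ->
  \sum_(m <= k <oo) (u k)%:E = l%:E.
Proof.
move=> H.
have E : (fun n => \sum_(m <= k < n) (u k)%:E) =
   EFin \o (fun n => (\sum_(m <= k < n) u k)%R).
  by apply/funext => n /=; rewrite sumEFin.
rewrite E EFin_lim; last by apply/cvg_ex; exists l.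
by rewrite (cvg_lim _ H).
Qed.

Lemma eser_single (f : nat -> \bar R) j : (forall k, 0 <= f k) ->
  (forall k, k != j -> f k = 0) -> \sum_(0 <= k <oo) f k = f j.
Proof.
move=> f0 fj.
rewrite (nneseries_split _ j.+1) //= add0n.
rewrite [X in _ + X]eseries0; last by move=> i ji _; apply: fj; rewrite neq_ltn ji orbT.
rewrite adde0 big_nat_recr //= big1_seq ?add0e // => i /andP[_].
by rewrite mem_index_iota => /andP[_ ij]; apply: fj; rewrite neq_ltn ij.
Qed.

Lemma eser_fin (f : nat -> \bar R) n : (forall k, 0 <= f k) ->
  \sum_(0 <= k <oo) (if (k < n)%N then f k else 0) = \sum_(0 <= k < n) f k.
Proof.
move=> f0.
rewrite (nneseries_split _ n); last by move=> k _; case: ifP.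
rewrite add0n [X in _ + X]eseries0; last by move=> i ni _; rewrite ltnNge ni.
rewrite adde0; apply: eq_big_nat => i /andP[_ ->] //.
Qed.

Lemma eser_shift (g : nat -> \bar R) i : (forall k, 0 <= g k) ->
  \sum_(0 <= k <oo) (if (i <= k)%N then g (k - i)%N else 0) = \sum_(0 <= k <oo) g k.
Proof.
move=> g0.
rewrite (nneseries_split _ i); last by move=> k _; case: ifP.
rewrite add0n big1_seq ?add0e; last first.
  by move=> k /andP[_]; rewrite mem_index_iota => /andP[_]; rewrite ltnNge => /negbTE ->.
rewrite -nneseries_addn; last by move=> k; case: ifP.
by apply: eq_eseriesr => k _; rewrite leq_addl addnK.
Qed.

Lemma eser_ge (f : nat -> \bar R) j : (forall k, 0 <= f k) ->
  f j <= \sum_(0 <= k <oo) f k.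
Proof.
move=> f0; apply: le_trans (nneseries_lim_ge j.+1 (fun n _ _ => f0 n)).
rewrite big_nat_recr //= leeDr //; exact: sume_ge0.
Qed.
End P1.

Section P2.
Context {R : realType}.
Local Open Scope ereal_scope.
Definition Eg (p : nat -> R) (s : R) : \bar R := \sum_(0 <= k <oo) (p k * s ^+ k)%:E.

Lemma Eg0 p : (forall k, (0 <= p k)%R) -> Eg p 0 = (p 0%N)%:E.
Proof.
move=> p0; rewrite /Eg (eser_single _ 0%N).
- by rewrite expr0 mulr1.
- by move=> k; rewrite lee_fin mulr_ge0 // exprn_ge0.
- by move=> k k0; rewrite expr0n (negbTE k0) mulr0.
Qed.

Lemma conv_ge0 (p q : nat -> R) : (forall k, (0 <= p k)%R) -> (forall k, (0 <= q k)%R) ->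
  forall k, (0 <= Defs.conv p q k)%R.
Proof. by move=> p0 q0 k; rewrite /Defs.conv sumr_ge0 // => i _; rewrite mulr_ge0. Qed.

Lemma convpow_ge0 {p : nat -> R} : (forall k, (0 <= p k)%R) ->
  forall j k, (0 <= convpow p j k)%R.
Proof.
move=> p0; elim=> [|j IH] k /=; first by rewrite ler0n.
exact: conv_ge0.
Qed.

Lemma Eg_conv {p q : nat -> R} {s y : R} :
  (forall k, (0 <= p k)%R) -> (forall k, (0 <= q k)%R) -> (0 <= s)%R ->
  Eg q s = y%:E -> Eg (Defs.conv p q) s = Eg p s * y%:E.
Proof.
move=> p0 q0 s0 Hq.
have a0 : forall k i, 0 <= (if (i < k.+1)%N then (p i * s ^+ i)%:E * (q (k - i)%N * s ^+ (k - i))%:E else 0).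
  move=> k i; case: ifP => // _; rewrite -EFinM lee_fin.
  by rewrite !mulr_ge0 // exprn_ge0.
have S1 : forall k, ((Defs.conv p q k) * s ^+ k)%:E =
   \sum_(0 <= i <oo) (if (i < k.+1)%N then (p i * s ^+ i)%:E * (q (k - i)%N * s ^+ (k - i))%:E else 0).
  move=> k; rewrite eser_fin; last first.
    by move=> i; rewrite -EFinM lee_fin !mulr_ge0 // exprn_ge0.
  under eq_bigr do rewrite -EFinM.
  rewrite sumEFin /Defs.conv big_distrl /= -(big_mkord xpredT (fun i => p i * q (k - i)%N * s ^+ k)%R).
  congr (_%:E); apply: eq_big_nat => i /andP[_ ik].
  rewrite (_ : s ^+ k = s ^+ i * s ^+ (k - i))%R; first by rewrite mulrACA.
  by rewrite -exprD subnKC // -ltnS.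
rewrite /Eg (eq_eseriesr (fun k _ => S1 k)).
rewrite nneseries_interchange //.
have S3 : forall i, \sum_(0 <= k <oo) (if (i < k.+1)%N then (p i * s ^+ i)%:E * (q (k - i)%N * s ^+ (k - i))%:E else 0)
   = (p i * s ^+ i)%:E * y%:E.
  move=> i.
  rewrite (eq_eseriesr (g := fun k => (p i * s ^+ i)%:E * (if (i <= k)%N then (q (k - i)%N * s ^+ (k - i))%:E else 0))); last first.
    by move=> k _; rewrite ltnS; case: ifP => //; rewrite mule0.
  rewrite nneseriesZl; last by move=> k _; case: ifP => // _; rewrite lee_fin mulr_ge0 // exprn_ge0.
  have E3 := @eser_shift R (fun j => (q j * s ^+ j)%:E) i
     (fun k => mulr_ge0 (q0 k) (exprn_ge0 k s0)).
  rewrite /= in E3; congr (_ * _); rewrite -Hq /Eg -E3 //.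
transitivity (\sum_(0 <= i <oo) (y%:E * (p i * s ^+ i)%:E)).
  by apply: eq_eseriesr => i _; rewrite S3 muleC.
rewrite nneseriesZl; first by rewrite muleC.
by move=> i _; rewrite lee_fin mulr_ge0 // exprn_ge0.
Qed.
Lemma Eg_convpow (p : nat -> R) (s x : R) :
  (forall k, (0 <= p k)%R) -> (0 <= s)%R -> Eg p s = x%:E ->
  forall j, Eg (convpow p j) s = (x ^+ j)%:E.
Proof.
move=> p0 s0 Hp; elim=> [|j IH] /=.
  rewrite /Eg (eser_single _ 0%N) ?expr0 ?mulr1 //.
    by move=> k; rewrite lee_fin mulr_ge0 ?exprn_ge0 ?ler0n.
  by move=> k /negbTE ->; rewrite mul0r.
by rewrite (Eg_conv p0 (convpow_ge0 p0 j) s0 IH) Hp -EFinM exprS.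
Qed.
End P2.

Section P3.
Context {R : realType}.
Local Open Scope ereal_scope.

Definition fLF (a b s : R) : R := (1 - (1 - s) / (a + b * (1 - s)))%R.

Lemma fLF_01 a b s : (0 < a)%R -> (0 < b)%R -> (1 <= a + b)%R -> (0 <= s <= 1)%R ->
  (0 <= fLF a b s <= 1)%R.
Proof.
move=> a0 b0 ab /andP[s0 s1].
have u0 : (0 <= 1 - s)%R by rewrite subr_ge0.
have D0 : (0 < a + b * (1 - s))%R by rewrite ltr_wpDr // mulr_ge0 // ltW.
have X0 : (0 <= (1 - s) / (a + b * (1 - s)))%R by rewrite divr_ge0 // ltW.
have X1 : ((1 - s) / (a + b * (1 - s)) <= 1)%R.
  rewrite ler_pdivrMr // mul1r; nra.
rewrite /fLF; apply/andP; split; lra.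
Qed.

Lemma addE_fin (x y : R) (S : \bar R) : x%:E + S = y%:E -> S = (y - x)%R%:E.
Proof.
case: S => [s||] //= [] <-; congr (_%:E); ring.
Qed.

Lemma LF_Eg a b p : (0 < a)%R -> (0 < b)%R -> is_LF a b p ->
  (forall k, (0 <= p k)%R) /\ forall s, (0 <= s <= 1)%R -> Eg p s = (fLF a b s)%:E.
Proof.
move=> a0 b0 [[p0 psum] Hf]; split => // s /andP[s0 s1].
have E1 : Eg p 1 = 1%:E.
  rewrite /Eg (eq_eseriesr (g := fun k => (p k)%:E)); last by move=> k _; rewrite expr1n mulr1.
  exact: real_eser psum.
have [->|sn1] := eqVneq s 1%R.
  by rewrite E1 /fLF subrr mul0r subr0.
have slt1 : (s < 1)%R by rewrite lt_neqAle sn1 s1.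
have le1 : Eg p s <= 1%:E.
  rewrite -E1; apply: lee_nneseries => [k _ _|k _].
    by rewrite lee_fin mulr_ge0 // exprn_ge0.
  by rewrite lee_fin expr1n ler_wpM2l // exprn_ile1.
have ge0 : 0 <= Eg p s by apply: nneseries_ge0 => k _ _; rewrite lee_fin mulr_ge0 // exprn_ge0.
have fin : Eg p s \is a fin_num by rewrite ge0_fin_numE // (le_lt_trans le1) // ltry.
have Eq : Eg p s = (fine (Eg p s))%:E by rewrite fineK.
have G : genfun p s = fine (Eg p s).
  apply: rseries_eq; first by move=> k _; rewrite mulr_ge0 // exprn_ge0.
  exact: Eq.
have := Hf s; rewrite s0 slt1 G => /(_ erefl) H.
rewrite Eq; congr (_%:E).
set g := fine (Eg p s) in H *.
have u0 : (0 < 1 - s)%R by rewrite subr_gt0.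
have D0 : (0 < a + b * (1 - s))%R by rewrite ltr_wpDr // mulr_ge0 // ltW.
have H' : ((1 - g)^-1 = (a + b * (1 - s)) / (1 - s))%R.
  rewrite -div1r H; field; by rewrite gt_eqF.
have H2 : (1 - g = (1 - s) / (a + b * (1 - s)))%R by rewrite -[(1 - g)%R]invrK H' invf_div.
rewrite /fLF -H2; ring.
Qed.
End P3.

Section P4.
Context {R : realType}.
Local Open Scope ereal_scope.

Lemma Pi0 (a : nat -> R) : Pi a 0 = 1%R.
Proof. by rewrite /Pi big_geq. Qed.
Lemma Rn0 (a b : nat -> R) : Rn a b 0 = 0%R.
Proof. by rewrite /Rn big_geq. Qed.
Lemma Pi_S (a : nat -> R) n : Pi a n.+1 = (Pi a n * a n.+1)%R.
Proof. by rewrite /Pi big_nat_recr. Qed.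
Lemma Rn_S (a b : nat -> R) n : Rn a b n.+1 = (Rn a b n + Pi a n * b n.+1)%R.
Proof. by rewrite /Rn big_nat_recr. Qed.

Context (off : nat -> nat -> R) (a b : nat -> R).
Context (hyp : forall k, (1 <= k)%N ->
  [/\ (0 < a k)%R, (0 < b k)%R, (1 <= a k + b k)%R & is_LF (a k) (b k) (off k)]).

Lemma Pi_gt0 n : (0 < Pi a n)%R.
Proof.
elim: n => [|n IH]; first by rewrite Pi0.
by rewrite Pi_S mulr_gt0 //; have [] := hyp n.+1 isT.
Qed.

Lemma Rn_ge0 n : (0 <= Rn a b n)%R.
Proof.
elim: n => [|n IH]; first by rewrite Rn0.
rewrite Rn_S addr_ge0 // mulr_ge0 // ?ltW ?Pi_gt0 //.
by have [] := hyp n.+1 isT.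
Qed.

Definition Gn n (s : R) : R := (1 - (1 - s) / (Pi a n + Rn a b n * (1 - s)))%R.

Lemma Gn_comp n s : (0 <= s <= 1)%R ->
  Gn n (fLF (a n.+1) (b n.+1) s) = Gn n.+1 s.
Proof.
move=> /andP[s0 s1].
have [A0 B0 _ _] := hyp n.+1 isT.
have P0 := Pi_gt0 n; have Q0 := Rn_ge0 n.
have u0 : (0 <= 1 - s)%R by rewrite subr_ge0.
rewrite /Gn /fLF Pi_S Rn_S.
set u := (1 - s)%R; set A := a n.+1; set B := b n.+1; set P := Pi a n; set Q := Rn a b n.
have D1 : (0 < A + B * u)%R by rewrite ltr_wpDr // mulr_ge0 // ltW.
have D2 : (0 < P * A + (Q + P * B) * u)%R.
  by rewrite ltr_wpDr ?mulr_gt0 // mulr_ge0 // addr_ge0 // mulr_ge0 // ltW.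
have -> : (1 - (1 - u / (A + B * u)) = u / (A + B * u))%R by ring.
have D3 : (P + Q * (u / (A + B * u)) = (P * A + (Q + P * B) * u) / (A + B * u))%R.
  by field; rewrite gt_eqF.
rewrite D3; congr (1 - _)%R; field; rewrite !gt_eqF //.
Qed.

Lemma Gn1 n : Gn n 1 = 1%R.
Proof. by rewrite /Gn subrr mul0r subr0. Qed.

Lemma gw_G n : (forall k, (0 <= gw_law off n k)%R) /\
  forall s, (0 <= s <= 1)%R -> Eg (gw_law off n) s = (Gn n s)%:E.
Proof.
elim: n => [|n [g0 IH]].
  split=> [k|s /andP[s0 _]] /=; first by rewrite ler0n.
  rewrite /Eg (eser_single _ 1%N).
  - by rewrite /Gn Pi0 Rn0 mul0r addr0 divr1 eqxx mul1r expr1; congr (_%:E); ring.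
  - by move=> k; rewrite lee_fin mulr_ge0 ?ler0n ?exprn_ge0.
  - by move=> k /negbTE ->; rewrite mul0r.
have [A0 B0 AB LF] := hyp n.+1 isT.
have [p0 Hp] := @LF_Eg _ _ _ _ A0 B0 LF.
pose c j k := convpow (off n.+1) j k.
have c0 : forall j k, (0 <= c j k)%R := convpow_ge0 p0.
pose D k := \sum_(0 <= j <oo) (gw_law off n j * c j k)%:E.
have KEY : forall s, (0 <= s <= 1)%R -> \sum_(0 <= k <oo) D k * (s ^+ k)%:E = (Gn n.+1 s)%:E.
  move=> s hs; have /andP[s0 s1] := hs.
  have t01 := @fLF_01 _ _ _ _ A0 B0 AB hs.
  have Ec : forall j, Eg (c j) s = (fLF (a n.+1) (b n.+1) s ^+ j)%:E := @Eg_convpow _ _ _ _ p0 s0 (Hp s hs).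
  transitivity (\sum_(0 <= k <oo) \sum_(0 <= j <oo) (gw_law off n j * (c j k * s ^+ k))%:E).
    apply: eq_eseriesr => k _; rewrite muleC /D -nneseriesZl.
      apply: eq_eseriesr => j _; rewrite -EFinM; congr (_%:E); ring.
    by move=> j _; rewrite lee_fin mulr_ge0.
  rewrite nneseries_interchange; last by move=> k j; rewrite lee_fin !mulr_ge0 // exprn_ge0.
  transitivity (\sum_(0 <= j <oo) (gw_law off n j)%:E * Eg (c j) s).
    apply: eq_eseriesr => j _; rewrite /Eg -nneseriesZl //.
    by move=> k _; rewrite lee_fin mulr_ge0 // exprn_ge0.
  transitivity (Eg (gw_law off n) (fLF (a n.+1) (b n.+1) s)).
    by rewrite [RHS]/Eg; apply: eq_eseriesr => j _; rewrite Ec -EFinM.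
  by rewrite IH // Gn_comp.
have D0 : forall k, 0 <= D k.
  by move=> k; apply: nneseries_ge0 => j _ _; rewrite lee_fin mulr_ge0.
have D1 : forall k, D k <= 1%:E.
  move=> k; have := KEY 1%R; rewrite ler01 lexx Gn1 => /(_ isT) K1.
  rewrite -K1; apply: le_trans (@eser_ge _ (fun k => D k * (1 ^+ k)%:E) k _).
    by rewrite expr1n mule1.
  by move=> i; rewrite expr1n mule1.
have gwE : forall k, (gw_law off n.+1 k)%:E = D k.
  move=> k; have fin : D k \is a fin_num by rewrite ge0_fin_numE // (le_lt_trans (D1 k)) // ltry.
  rewrite -(fineK fin); congr (_%:E) => /=; apply: rseries_eq.
    by move=> j _; rewrite mulr_ge0.
  by rewrite fineK.
split.
  by move=> k; rewrite -lee_fin gwE.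
move=> s hs; rewrite -KEY // /Eg; apply: eq_eseriesr => k _.
by rewrite EFinM gwE.
Qed.
End P4.

Section P5.
Context {R : realType}.
Local Open Scope ereal_scope.
Context (off : nat -> nat -> R) (a b : nat -> R).
Context (hyp : forall k, (1 <= k)%N ->
  [/\ (0 < a k)%R, (0 < b k)%R, (1 <= a k + b k)%R & is_LF (a k) (b k) (off k)]).

Lemma gw_zero n : gw_law off n 0 = (1 - (Pi a n + Rn a b n)^-1)%R.
Proof.
have [g0 HE] := @gw_G _ off a b hyp n.
have := HE 0%R; rewrite lexx ler01 Eg0 // => /(_ isT) [->].
by rewrite /Gn subr0 mulr1 div1r.
Qed.

Lemma surv_eq n : surv_prob off n = ((Pi a n + Rn a b n)^-1)%R.
Proof.
have [g0 HE] := @gw_G _ off a b hyp n.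
have := HE 1%R; rewrite ler01 lexx Gn1 => /(_ isT).
rewrite /Eg (nneseries_split _ 1%N); last by move=> k _; rewrite lee_fin mulr_ge0 // exprn_ge0.
rewrite add0n big_nat1 => /addE_fin H.
rewrite /surv_prob; apply: rseries_eq; first by move=> k _.
rewrite (eq_eseriesr (g := fun k => (gw_law off n k * 1 ^+ k)%:E)); last by move=> k _; rewrite expr1n mulr1.
by rewrite H expr0 mulr1 gw_zero; congr (_%:E); ring.
Qed.
End P5.

Section P6.
Context {R : realType}.
Local Open Scope ereal_scope.

Lemma eser_cond_true (f : nat -> \bar R) N (P : pred nat) :
  (forall k, (N <= k)%N -> P k) ->
  \sum_(N <= k <oo | P k) f k = \sum_(N <= k <oo) f k.
Proof.
move=> HP; apply: congr_lim; apply/funext => n.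
rewrite big_nat_cond [RHS]big_nat_cond; apply: eq_bigl => k.
by case/boolP: (N <= k < n)%N => //= /andP[/HP ->].
Qed.

Context (a b : nat -> R).
Context (hyp : forall k, (1 <= k)%N ->
  [/\ (0 < a k)%R, (0 < b k)%R & (1 <= a k + b k)%R]).

Let Pg n : (0 < Pi a n)%R.
Proof.
elim: n => [|n IH]; first by rewrite Pi0.
by rewrite Pi_S mulr_gt0 //; have [] := hyp n.+1 isT.
Qed.

Let D n := (Pi a n + Rn a b n)%R.

Let Dinc n : (D n <= D n.+1)%R.
Proof.
rewrite /D Pi_S Rn_S; have [A0 B0 AB] := hyp n.+1 isT.
have := Pg n; nra.
Qed.

Let Dmono m n : (m <= n)%N -> (D m <= D n)%R.
Proof. by move: m n; apply/nondecreasing_seqP => k; exact: Dinc. Qed.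

Let Dge1 n : (1 <= D n)%R.
Proof. by have := @Dmono 0%N n (leq0n n); rewrite /D Pi0 Rn0 addr0. Qed.

Lemma det_main : Rinf a b < +oo -> Rinf_inv a b = +oo ->
  exists r : R, [/\ Rinf a b = r%:E, (1 <= r)%R, Pi a n @[n --> \oo] --> 0%R
                  & Rn a b n @[n --> \oo] --> r].
Proof.
move=> Rfin Rinv.
pose x k := (Pi a k.-1 * b k)%R.
have x0 : forall k, (1 <= k)%N -> (0 <= x k)%R.
  by move=> k k1; have [_ B0 _] := hyp k k1; rewrite mulr_ge0 // ltW.
have Rge0 : 0 <= Rinf a b by apply: nneseries_ge0 => k k1 _; rewrite lee_fin x0.
have fin : Rinf a b \is a fin_num by rewrite ge0_fin_numE.
set r := fine (Rinf a b).
have Rr : Rinf a b = r%:E by rewrite fineK.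
have Scv : (fun N => (\sum_(1 <= k < N) x k)%R) @ \oo --> r := @ser_cvg _ x 1%N r x0 Rr.
have Rcv : Rn a b n @[n --> \oo] --> r.
  by rewrite -cvg_shiftS in Scv; exact: Scv.
have Rle : forall n, (Rn a b n <= r)%R.
  have nd : nondecreasing_seq (Rn a b).
    by apply/nondecreasing_seqP => n; rewrite Rn_S lerDl mulr_ge0 // ?ltW ?Pg //; have [] := hyp n.+1 isT.
  move=> n; rewrite -(cvg_lim _ Rcv) //; apply: nondecreasing_cvgn_le => //.
  by apply/cvg_ex; exists r.
have Pcv : Pi a n @[n --> \oo] --> 0%R.
  case: (pselect (exists m, (r < D m)%R)) => [[m Hm]|nH]; last first.
    apply: (@squeeze_cvgr _ _ _ _ (fun _ => 0%R) (fun n => r - Rn a b n)%R).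
    - apply: nearW => n; rewrite (ltW (Pg n)) /=.
      have : (D n <= r)%R by rewrite leNgt; apply/negP => H; apply: nH; exists n.
      by rewrite /D; lra.
    - exact: cvg_cst.
    - by rewrite -(subrr r); apply: cvgB => //; exact: cvg_cst.
  exfalso.
  set c := (D m - r)%R.
  have c0 : (0 < c)%R by rewrite subr_gt0.
  have Pc : forall k, (m <= k)%N -> (c <= Pi a k)%R.
    by move=> k mk; have H1 := Dmono _ _ mk; have H2 := Rle k; move: H1; rewrite /c /D => H1; lra.
  pose K := ((c * c)^-1)%R.
  pose y k := ((Pi a k)^-1 * b k)%R.
  have y0 : forall k, (1 <= k)%N -> (0 <= y k)%R.
    by move=> k k1; have [_ B0 _] := hyp k k1; rewrite mulr_ge0 ?invr_ge0 ?ltW ?Pg.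
  have yle : forall k, (1 + m <= k)%N -> (y k <= K * x k)%R.
    move=> k mk; have k1 : (1 <= k)%N by apply: leq_trans mk; rewrite leq_addr.
    have [_ B0 _] := hyp k k1.
    have Pk := Pc k (leq_trans (leq_addl 1 m) mk).
    have Pk1 : (c <= Pi a k.-1)%R by apply: Pc; rewrite -ltnS prednK // -add1n.
    have P0 := Pg k; have Q0 := Pg k.-1.
    rewrite /y /x /K.
    set P := Pi a k; set Q := Pi a k.-1.
    have h1 : (1 <= (Q * P) / (c * c))%R.
      by rewrite ler_pdivlMr ?mulr_gt0 // mul1r ler_pM // ltW.
    rewrite mulrC ler_pdivrMr //.
    have -> : ((c * c)^-1 * (Q * b k) * P = b k * ((Q * P) / (c * c)))%R.
      by field; rewrite gt_eqF // mulr_gt0.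
    by rewrite ler_peMr // ltW.
  have Ysplit := @nneseries_split R (fun k => (y k)%:E) 1%N m.
  have Xsplit := @nneseries_split R (fun k => (x k)%:E) 1%N m.
  have RY : Rinf_inv a b = \sum_(1 <= k < 1 + m) (y k)%:E + \sum_(1 + m <= k <oo) (y k)%:E.
    by apply: Ysplit => k k1; rewrite lee_fin y0.
  have RX : Rinf a b = \sum_(1 <= k < 1 + m) (x k)%:E + \sum_(1 + m <= k <oo) (x k)%:E.
    by apply: Xsplit => k k1; rewrite lee_fin x0.
  have m1 : forall k, (1 + m <= k)%N -> (1 <= k)%N.
    by move=> k; apply: leq_trans; rewrite leq_addr.
  have tx0 : 0 <= \sum_(1 + m <= k <oo) (x k)%:E.
    by apply: nneseries_ge0 => k k1 _; rewrite lee_fin x0 // m1.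
  have txle : \sum_(1 + m <= k <oo) (x k)%:E <= Rinf a b.
    by rewrite RX leeDr // big_nat_cond sume_ge0 // => k /andP[/andP[k1 _] _]; rewrite lee_fin x0.
  have txfin : \sum_(1 + m <= k <oo) (x k)%:E \is a fin_num.
    by rewrite ge0_fin_numE // (le_lt_trans txle Rfin).
  have e1 : \sum_(1 + m <= k <oo) (K * x k)%:E = K%:E * \sum_(1 + m <= k <oo) (x k)%:E.
    transitivity (\sum_(1 + m <= k <oo | (1 <= k)%N) (K%:E * (x k)%:E)).
      by rewrite (eser_cond_true _ _ (fun k => (1 <= k)%N) m1).
    rewrite nneseriesZl; last by move=> k k1; rewrite lee_fin x0.
    by rewrite (eser_cond_true _ _ (fun k => (1 <= k)%N) m1).
  have tyle : \sum_(1 + m <= k <oo) (y k)%:E <= K%:E * \sum_(1 + m <= k <oo) (x k)%:E.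
    rewrite -e1.
    have H : \sum_(1 + m <= k <oo | (1 + m <= k)%N) (y k)%:E <=
             \sum_(1 + m <= k <oo | (1 + m <= k)%N) (K * x k)%:E.
      apply: lee_nneseries => [k _ mk|k mk]; first by rewrite lee_fin y0 // m1.
      by rewrite lee_fin yle.
    by rewrite !(eser_cond_true _ _ (fun k => (1 + m <= k)%N)) in H.
  have ty0 : 0 <= \sum_(1 + m <= k <oo) (y k)%:E.
    by apply: nneseries_ge0 => k k1 _; rewrite lee_fin y0 // m1.
  have tyfin : \sum_(1 + m <= k <oo) (y k)%:E \is a fin_num.
    rewrite ge0_fin_numE // (le_lt_trans tyle) //.
    by rewrite -(fineK txfin) -EFinM ltry.
  by move: Rinv; rewrite RY -(fineK tyfin) sumEFin -EFinD.
exists r; split => //.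
have Dcv : D n @[n --> \oo] --> r.
  by rewrite -[r]add0r; apply: cvgD.
rewrite -(cvg_lim _ Dcv) //; apply: limr_ge; first by apply/cvg_ex; exists r.
by apply: nearW => n; exact: Dge1.
Qed.
End P6.

Section P7.
Local Open Scope ereal_scope.
Context (R : realType) (d : measure_display) (T : measurableType d)
  (P : probability T R) (A B : nat -> T -> R).
Context (iid : iid_pairs P A B).
Context (H1 : P [set w | (0 < A 1%N w)%R /\ (0 < B 1%N w)%R /\ (1 <= A 1%N w + B 1%N w)%R] = 1%E).

Definition valid (x y : R) := (0 < x)%R /\ (0 < y)%R /\ (1 <= x + y)%R.

Let mpre (f : T -> R) (i : interval R) : measurable_fun setT f -> measurable (f @^-1` [set` i]).
Proof. by move=> mf; rewrite -[_ @^-1` _]setTI; apply: mf => //; exact: measurable_itv. Qed.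

Let S1null : P.-negligible (~` [set w | valid (A 1%N w) (B 1%N w)]).
Proof.
have [mA mB] := iid.1 1%N isT.
have mS : measurable [set w | valid (A 1%N w) (B 1%N w)].
  rewrite (_ : [set w | _] = (A 1%N @^-1` [set` `]0%R, +oo[]) `&`
      ((B 1%N @^-1` [set` `]0%R, +oo[]) `&` (((A 1%N \+ B 1%N)%R) @^-1` [set` `[1%R, +oo[]))).
    apply: measurableI; first exact: mpre.
    apply: measurableI; first exact: mpre.
    by apply: mpre; exact: measurable_funD.
  by apply/seteqP; split => w /=; rewrite /valid !in_itv /= !andbT.
apply/negligibleP; first exact: measurableC.
have h := probability_setC P mS.
have E : P [set w | valid (A 1%N w) (B 1%N w)] = 1 := H1.
rewrite E subee // in h.
Qed.

Let rect_null k (U V : set R) : (1 <= k)%N -> measurable U -> measurable V ->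
  (forall x y, U x -> V y -> ~ valid x y) ->
  P.-negligible [set w | U (A k w) /\ V (B k w)].
Proof.
move=> k1 mU mV disj.
have [mA mB] := iid.1 k k1.
have [mA1 mB1] := iid.1 1%N isT.
have mk : forall j, measurable_fun setT (A j) -> measurable_fun setT (B j) ->
    measurable [set w | U (A j w) /\ V (B j w)].
  move=> j ma mb; rewrite (_ : [set w | _] = (A j @^-1` U) `&` (B j @^-1` V)) //.
  apply: measurableI.
    by rewrite -[_ @^-1` _]setTI; apply: ma.
  by rewrite -[_ @^-1` _]setTI; apply: mb.
have ak : all (fun j => 1 <= j)%N [:: k] by rewrite /= k1.
have E := iid.2 [:: k] (fun _ => U) (fun _ => V) isT ak (fun _ => mU) (fun _ => mV).
rewrite big_seq1 in E.
have E' : P [set w | U (A k w) /\ V (B k w)] = P [set w | U (A 1%N w) /\ V (B 1%N w)].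
  rewrite -E; congr (P _); apply/seteqP; split => w /=.
    by move=> H j; rewrite inE => /eqP ->.
  by move=> H; apply: H; rewrite inE.
have N1 : P.-negligible [set w | U (A 1%N w) /\ V (B 1%N w)].
  by apply: negligibleS S1null => w /= [Uw Vw]; exact: disj.
have Z1 := measure_negligible (mk _ mA1 mB1) N1.
apply/negligibleP; first exact: mk.
have Z : P [set w | U (A k w) /\ V (B k w)] = 0 by rewrite E' Z1.
exact: Z.
Qed.

Lemma valid_ae : {ae P, forall w, forall k, (1 <= k)%N -> valid (A k w) (B k w)}.
Proof.
apply: ae_foralln => k.
case: (leqP 1 k) => k1; last first.
  by apply: aeW => w.
pose Q (n : nat) : set T := if @unpickle rat n is Some q then
  [set w | [set x | x < ratr q]%R (A k w) /\ [set y | y < 1 - ratr q]%R (B k w)] else set0.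
have mlt : forall c : R, measurable [set x : R | (x < c)%R].
  move=> c; rewrite (_ : [set x | _] = [set` `]-oo, c[]); first exact: measurable_itv.
  by apply/seteqP; split => x /=; rewrite in_itv.
have mle : measurable [set x : R | (x <= 0)%R].
  rewrite (_ : [set x | _] = [set` `]-oo, 0%R]]); first exact: measurable_itv.
  by apply/seteqP; split => x /=; rewrite in_itv.
have N1 : P.-negligible [set w | [set x : R | (x <= 0)%R] (A k w) /\ [set: R] (B k w)].
  apply: rect_null => // x y /= x0 _ [x0' _]; lra.
have N2 : P.-negligible [set w | [set: R] (A k w) /\ [set x : R | (x <= 0)%R] (B k w)].
  apply: rect_null => // x y /= _ y0 [_ [y0' _]]; lra.
have N3 : P.-negligible (\bigcup_n Q n).
  apply: negligible_bigcup => n; rewrite /Q.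
  case: (unpickle n) => [q|]; last exact: negligible_set0.
  apply: rect_null => // x y /= xq yq [_ [_ xy]]; lra.
apply: negligibleS (negligibleU (negligibleU N1 N2) N3) => w /=.
move=> nv'; have nv : ~ valid (A k w) (B k w) by move=> h; apply: nv'.
have [x0|x0] := leP (A k w) 0%R; first by left; left; split.
have [y0|y0] := leP (B k w) 0%R; first by left; right; split.
have [xy|xy] := ltP (A k w + B k w)%R 1%R; last first.
  by exfalso; apply: nv; split; [|split].
have lt1 : (A k w < 1 - B k w)%R by rewrite ltrBrDr.
right; have [q] := rat_in_itvoo lt1; rewrite in_itv /= => /andP[q1 q2].
exists (pickle q); first by [].
rewrite /Q pickleK /=; split; first exact: q1.
by rewrite ltrBrDr addrC -ltrBrDr.
Qed.
End P7.


Theorem theorem4p1 (R : realType) (d : measure_display) (T : measurableType d)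
  (P : probability T R) (A B : nat -> T -> R)
  (off : T -> nat -> nat -> R) :
  iid_pairs P A B ->
  P [set w | 0 < A 1%N w /\ 0 < B 1%N w /\ 1 <= A 1%N w + B 1%N w] = 1%E ->
  (forall w k, (1 <= k)%N -> 0 < A k w -> 0 < B k w -> 1 <= A k w + B k w ->
     is_LF (A k w) (B k w) (off w k)) ->
  {ae P, forall w, Rinf (A ^~ w) (B ^~ w) < +oo /\
                   Rinf_inv (A ^~ w) (B ^~ w) = +oo}%E ->
  {ae P, forall w,
     ext_prob (off w) < 1 /\
     exists r : R,
       Rinf (A ^~ w) (B ^~ w) = r%:E /\ 1 <= r /\
       (1 - ext_prob (off w))^-1 = r /\
       (fun n => (Pi (A ^~ w) n)^-1 *
                 ((Rn (A ^~ w) (B ^~ w) n)^-1 - surv_prob (off w) n))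
         @ \oo --> (r ^-2 : R)}.
Proof.
move=> iid H1 Hlf Hae.
have Hv := @valid_ae R d T P A B iid H1.
apply: filterS2 Hv Hae => w Hv [Rfin Rinv].
set a := A ^~ w; set b := B ^~ w.
have hyp : forall k, (1 <= k)%N ->
    [/\ 0 < a k, 0 < b k, 1 <= a k + b k & is_LF (a k) (b k) (off w k)].
  by move=> k k1; have [x0 [y0 xy]] := Hv k k1; split => //; exact: Hlf.
have hyp' : forall k, (1 <= k)%N -> [/\ 0 < a k, 0 < b k & 1 <= a k + b k].
  by move=> k k1; have [] := hyp k k1.
have [r [Rr r1 Pcv Rcv]] := @det_main R a b hyp' Rfin Rinv.
have r0 : 0 < r by apply: lt_le_trans r1.
have Dcv : (Pi a n + Rn a b n) @[n --> \oo] --> r.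
  by rewrite -[r]add0r; apply: cvgD.
have gcv : gw_law (off w) n 0 @[n --> \oo] --> 1 - r^-1.
  have -> : (fun n => gw_law (off w) n 0) = (fun n => 1 - (Pi a n + Rn a b n)^-1).
    by apply/funext => n; rewrite (@gw_zero _ (off w) a b hyp).
  apply: cvgB; first exact: cvg_cst.
  by apply: cvgV => //; rewrite gt_eqF.
have q : ext_prob (off w) = 1 - r^-1 by apply: cvg_lim.
split.
  by rewrite q ltrBlDr ltrDl invr_gt0.
exists r; split => //; split => //; split.
  by rewrite q (_ : 1 - (1 - r^-1) = r^-1) ?invrK //; ring.
have Hu : (fun n => (Rn a b n * (Pi a n + Rn a b n))^-1) @ \oo --> r ^-2.
  rewrite expr2; apply: cvgV; first by rewrite gt_eqF // mulr_gt0.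
  exact: cvgM.
apply: cvg_trans Hu; apply: near_eq_cvg.
near=> n.
have n1 : (1 <= n)%N by near: n; exists 1%N.
have Pn := @Pi_gt0 _ (off w) a b hyp n.
have Rn0 : 0 < Rn a b n.
  have -> : n = n.-1.+1 by rewrite prednK.
  rewrite Rn_S ltr_wpDl ?(@Rn_ge0 _ (off w) a b hyp) // mulr_gt0 ?(@Pi_gt0 _ (off w) a b hyp) //.
  by have [] := hyp n.-1.+1 isT.
rewrite /= (@surv_eq _ (off w) a b hyp); field.
by rewrite !gt_eqF // ?addr_gt0 // ?mulr_gt0 // addr_gt0.
Unshelve. all: by end_near.
Qed.
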